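(* Let $n\in\mathbb{N}$, $h_0>0$, $h_1,\ldots,h_n\in\mathbb{C}$, and $H(z)\coloneq h_0+2\sum_{k=1}^nh_kz^k$. There is exactly one such polynomial $H$ (for given $h_0$) satisfying all of: $\operatorname{Re}H(z)>0$ for all $z\in\Delta$; $h_n>0$; the zeros of $\operatorname{Re}H$ on the unit circle are exactly the $n$-th roots of $-1$. Namely, $H(z)=h_0(1+z^n)$.
   Context: $\Delta=\{z\in\mathbb{C}:|z|<1\}$ is the open unit disk. *)

(* Defs.v *)
From HB Require Import structures.
From mathcomp Require Import all_boot all_order all_algebra.
From mathcomp Require Import complex.
From mathcomp Require Import reals.
Set Implicit Arguments. Unset Strict Implicit. Unset Printing Implicit Defensive.
Import Order.TTheory GRing.Theory Num.Theory.
Local Open Scope ring_scope.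
Local Open Scope complex_scope.

Definition Hpoly (R : rcfType) (n : nat) (h0 : R) (h : nat -> R[i]) (z : R[i]) : R[i] :=
  h0%:C + 2 * \sum_(1 <= k < n.+1) h k * z ^+ k.

(* Main.v *)
Require Import Defs.
From HB Require Import structures.
From mathcomp Require Import all_boot all_order all_algebra.
From Stdlib Require Import Lia.
From mathcomp Require Import complex polyrcf ring lra zify separable.
From mathcomp Require Import reals.
Import Order.TTheory GRing.Theory Num.Theory.
Local Open Scope ring_scope.
Local Open Scope complex_scope.
Set Implicit Arguments. Unset Strict Implicit.
Local Notation Re := complex.Re.
Local Notation Im := complex.Im.

Section S.
Variable R : rcfType.
Implicit Types x y : R[i].

Lemma ReD x y : Re (x + y) = Re x + Re y. Proof. case: x => a b; case: y => c d; simpc; done. Qed.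
Lemma ImD x y : Im (x + y) = Im x + Im y. Proof. case: x => a b; case: y => c d; simpc; done. Qed.
Lemma Re0 : Re (0 : R[i]) = 0. Proof. by []. Qed.
Lemma Re_sum I (r : seq I) (P : pred I) (F : I -> R[i]) :
  Re (\sum_(i <- r | P i) F i) = \sum_(i <- r | P i) Re (F i).
Proof. exact: (big_morph _ ReD Re0). Qed.
Lemma Im_sum I (r : seq I) (P : pred I) (F : I -> R[i]) :
  Im (\sum_(i <- r | P i) F i) = \sum_(i <- r | P i) Im (F i).
Proof. exact: (big_morph _ ImD (erefl (Im (0:R[i])))). Qed.
Lemma ReMr x (r : R) : Re (x * r%:C) = Re x * r.
Proof. by case: x => a b; simpc. Qed.
Lemma ReMl x (r : R) : Re (r%:C * x) = r * Re x.
Proof. by case: x => a b; simpc. Qed.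
Lemma ImMl x (r : R) : Im (r%:C * x) = r * Im x.
Proof. by case: x => a b; simpc. Qed.
Lemma realC_exp (r : R) k : (r ^+ k)%:C = r%:C ^+ k.
Proof. by rewrite rmorphXn. Qed.
End S.

Section Main.
Variables (R : rcfType) (n : nat) (h0 : R) (h : nat -> R[i]).
Definition cf (k : nat) : R[i] := if k == 0%N then h0%:C else 2 * h k.

Lemma Hsum z : Hpoly n h0 h z = \sum_(k < n.+1) cf k * z ^+ k.
Proof.
rewrite /Hpoly big_ord_recl /= expr0 mulr1 /cf /=; congr (_ + _).
rewrite mulr_sumr big_add1 /= big_mkord; apply: eq_bigr => i _.
by rewrite mulrA.
Qed.

Lemma C1 : (1 : R)%:C = 1. Proof. exact: rmorph1. Qed.
Lemma C0 : (0 : R)%:C = 0. Proof. exact: rmorph0. Qed.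

Lemma norm_realC (r : R) : 0 <= r -> `|r%:C| = r%:C.
Proof. by move=> r0; rewrite ger0_norm // ler0c. Qed.

Hypothesis hpos : forall z : R[i], `|z| < 1 -> 0 < Re (Hpoly n h0 h z).

Lemma circle_nonneg z : `|z| = 1 -> 0 <= Re (Hpoly n h0 h z).
Proof.
move=> z1; rewrite leNgt; apply/negP => neg.
pose p := \poly_(k < n.+1) Re (cf k * z ^+ k).
have pE r : p.[r] = Re (Hpoly n h0 h (r%:C * z)).
  rewrite horner_poly Hsum Re_sum; apply: eq_bigr => i _.
  by rewrite exprMn mulrCA -realC_exp ReMl mulrC.
have p0 : 0 < p.[0].
  by rewrite pE C0 mul0r; apply: hpos; rewrite normr0 ltr01.
have p1 : p.[1] < 0 by rewrite pE C1 mul1r.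
have p01 : (- p).[0] <= 0 <= (- p).[1].
  by rewrite !hornerN oppr_le0 oppr_ge0 !ltW.
have [x xin rx] := @poly_ivt R (- p) 0 1 ler01 p01.
move: xin => /andP [x0 x1].
move: rx => /rootP; rewrite hornerN => /eqP; rewrite oppr_eq0 => /eqP rx.
have [x1'|xlt] := eqVneq x 1.
  by move: rx; rewrite x1' => rx; move: p1; rewrite rx ltxx.
have xl1 : x < 1 by rewrite lt_neqAle xlt x1.
have := hpos (z := x%:C * z); rewrite normrM z1 mulr1 norm_realC // -C1 ltcR.
by move=> /(_ xl1); rewrite -pE rx ltxx.
Qed.
Lemma deriv0_nonneg (g : {poly R}) :
  (forall t, 0 <= g.[t]) -> g.[0] = 0 -> g`_1 = 0.
Proof.
move=> gpos g0.
have /factor_theorem [q gq] : root g 0 by apply/rootP.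
have g1 : g`_1 = q.[0] by rewrite gq subr0 coefMX /= horner_coef0.
rewrite g1; apply/eqP; apply: contraT => qn0.
have qg0 : 0 < `|q.[0]| by rewrite normr_gt0.
have [d d0 hd] := poly_cont 0 q qg0.
have d2 : 0 < d / 2 by rewrite divr_gt0.
have d2d : d / 2 < d by rewrite ltr_pdivrMr // ltr_pMr // ltr1n.
have gt : forall t, g.[t] = q.[t] * t by move=> t; rewrite gq subr0 hornerMX.
have [qp|qn] := ltP 0 q.[0].
- have := hd (- (d / 2)); rewrite subr0 normrN gtr0_norm // => /(_ d2d).
  rewrite ltr_distl gtr0_norm // subrr => /andP [qtp _].
  have := gpos (- (d / 2)); rewrite gt.
  by rewrite pmulr_rge0 // oppr_ge0 leNgt d2.
- have qn' : q.[0] < 0 by rewrite lt_neqAle qn qn0.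
  have := hd (d / 2); rewrite subr0 gtr0_norm // => /(_ d2d).
  rewrite ltr_distl ltr0_norm // opprK subrr => /andP [_ qtn].
  have := gpos (d / 2); rewrite gt.
  by rewrite nmulr_rge0 // leNgt d2.
Qed.

Lemma ReMn (x : R[i]) m : Re (x *+ m) = Re x *+ m.
Proof. by elim: m => [|m IH]; rewrite ?mulr0n // !mulrS ReD IH. Qed.

Lemma RePoly (G : {poly R[i]}) t : (\poly_(l < size G) Re G`_l).[t] = Re G.[t%:C].
Proof.
rewrite horner_poly horner_coef Re_sum; apply: eq_bigr => i _.
by rewrite -realC_exp ReMr.
Qed.

Lemma uv_id (u v : R[i]) k : (k <= n)%N -> v != 0 ->
  u ^+ (n + k) * v ^+ (n - k) = (u * v) ^+ n * (u / v) ^+ k.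
Proof.
move=> kn v0; rewrite exprMn expr_div_n.
have vk : v ^+ k != 0 by rewrite expf_neq0.
rewrite (_ : v ^+ n = v ^+ (n - k) * v ^+ k); last by rewrite -exprD subnK.
by rewrite exprD; field.
Qed.

Lemma normIt (t : R) : `|1 +i* t| = `|1 -i* t|.
Proof. by simpc; rewrite sqrrN. Qed.

Lemma norm_root1 (z : R[i]) : (0 < n)%N -> z ^+ n = -1 -> `|z| = 1.
Proof.
move=> n0 zn; apply/eqP; rewrite -(pexpr_eq1 n0) ?normr_ge0 //.
by rewrite -normrX zn normrN normr1.
Qed.

Definition Ap : {poly R[i]} := 1 + 'i%:P * 'X.
Definition Bp : {poly R[i]} := 1 - 'i%:P * 'X.
Definition Gp (z : R[i]) : {poly R[i]} :=
  \sum_(k < n.+1) (cf k * z ^+ k)%:P * (Ap ^+ (n + k) * Bp ^+ (n - k)).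

Lemma Gp_horner z t : (Gp z).[t%:C] =
  ((1 +i* t) * (1 -i* t)) ^+ n * Hpoly n h0 h (z * ((1 +i* t) / (1 -i* t))).
Proof.
have eA : Ap.[t%:C] = 1 +i* t.
  by rewrite /Ap !hornerE -[t%:C]/(t +i* 0) -[1 : R[i]]/(1 +i* 0); simpc.
have eB : Bp.[t%:C] = 1 -i* t.
  by rewrite /Bp !hornerE -[t%:C]/(t +i* 0) -[1 : R[i]]/(1 +i* 0); simpc.
have B0 : 1 -i* t != 0.
  by apply/eqP => /(congr1 (@complex.Re R)) /= /eqP; rewrite oner_eq0.
rewrite Hsum mulr_sumr /Gp horner_sum; apply: eq_bigr => k _.
rewrite hornerM hornerC hornerM !horner_exp eA eB uv_id //; last first.
  by rewrite -ltnS.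
set w := (_ / _); rewrite exprMn [(z * w) ^+ _]exprMn.
move: (cf k) (z ^+ k) (w ^+ k) ((1 +i* t) ^+ n) ((1 -i* t) ^+ n) => x1 x2 x3 x4 x5.
by rewrite mulrC -!mulrA; do 2 congr (_ * _); rewrite [RHS]mulrA mulrC.
Qed.

Lemma uvE (t : R) : (1 +i* t) * (1 -i* t) = (1 + t ^+ 2)%:C.
Proof. by simpc; rewrite -[(1 + t ^+ 2)%:C]/((1 + t ^+ 2) +i* 0) addNr expr2. Qed.

Lemma Gp_deriv z : (Gp z)`_1 =
  \sum_(k < n.+1) (cf k * z ^+ k) * ('i *+ (n + k) - 'i *+ (n - k)).
Proof.
rewrite -[(Gp z)`_1]mulr1n -coef_deriv -horner_coef0 /Gp raddf_sum horner_sum.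
apply: eq_bigr => k _ /=.
rewrite derivM derivC mul0r add0r hornerM hornerC; congr (_ * _).
have dA : Ap^`() = 'i%:P.
  by rewrite /Ap derivD derivC add0r derivM derivC mul0r add0r derivX mulr1.
have dB : Bp^`() = - 'i%:P.
  by rewrite /Bp derivB derivC sub0r derivM derivC mul0r add0r derivX mulr1.
have A0 : Ap.[0] = 1 by rewrite /Ap hornerD hornerC hornerM hornerX mulr0 addr0.
have B0 : Bp.[0] = 1 by rewrite /Bp hornerD hornerN hornerC hornerM hornerX mulr0 subr0.
rewrite derivM !deriv_exp dA dB hornerD !hornerM !hornerMn !hornerM !horner_exp.
by rewrite A0 B0 hornerN !hornerC !expr1n !mulr1 mul1r mulNrn.
Qed.

Lemma B_neq0 (t : R) : 1 -i* t != 0.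
Proof. by apply/eqP => /(congr1 (@complex.Re R)) /= /eqP; rewrite oner_eq0. Qed.

Lemma deriv_cond z : (0 < n)%N -> z ^+ n = -1 ->
  (forall w, `|w| = 1 -> 0 <= Re (Hpoly n h0 h w)) ->
  Re (Hpoly n h0 h z) = 0 ->
  \sum_(k < n.+1) Im (cf k * z ^+ k) *+ k = 0.
Proof.
move=> n0 zn circ hz.
pose g := \poly_(l < size (Gp z)) Re (Gp z)`_l.
have gpos : forall t, 0 <= g.[t].
  move=> t; rewrite RePoly Gp_horner uvE -realC_exp ReMl mulr_ge0 //.
    by rewrite exprn_ge0 // addr_ge0 // sqr_ge0.
  apply: circ; rewrite normrM (norm_root1 n0 zn) mul1r normf_div normIt divff //.
  by rewrite normr_eq0 B_neq0.
have g0 : g.[0] = 0.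
  rewrite RePoly Gp_horner oppr0 !complexr0 C1.
  by rewrite mulr1 expr1n divr1 mulr1 mul1r.
have hRe : Re (Gp z)`_1 = 0.
  have := deriv0_nonneg gpos g0; rewrite coef_poly; case: ifP => // sz _.
  by rewrite nth_default // leqNgt sz.
move: hRe; rewrite Gp_deriv Re_sum.
rewrite (eq_bigr (fun k : 'I_n.+1 => - (Im (cf k * z ^+ k) *+ k) - Im (cf k * z ^+ k) *+ k)).
  rewrite big_split /= sumrN -opprD => /eqP; rewrite oppr_eq0 -mulr2n mulrn_eq0 /=.
  by move/eqP.
move=> k _.
have kn : (k <= n)%N by rewrite -ltnS.
rewrite -mulrnBr; last by lia.
rewrite (_ : (n + k - (n - k))%N = (k + k)%N); last by lia.
by rewrite mulrnAr ReMn ReiNIm mulrnDr mulNrn.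
Qed.

Lemma ImMn (x : R[i]) m : Im (x *+ m) = Im x *+ m.
Proof. by elim: m => [|m IH]; rewrite ?mulr0n // !mulrS ImD IH. Qed.

Lemma conj_pow (z : R[i]) k : (0 < n)%N -> z ^+ n = -1 -> (k <= n)%N ->
  (conjc z) ^+ k = - z ^+ (n - k).
Proof.
move=> n0 zn kn.
have zz : z * conjc z = 1 by rewrite -sqr_normc (norm_root1 n0 zn) expr1n.
have zk0 : z ^+ k != 0.
  apply: expf_neq0; apply/eqP => z0; move: zn; rewrite z0 expr0n.
  by rewrite gtn_eqF // => /eqP; rewrite eq_sym oppr_eq0 oner_eq0.
apply: (mulfI zk0); rewrite -exprMn zz expr1n mulrN -exprD subnKC //.
by rewrite zn opprK.
Qed.

Lemma condA (z : R[i]) : (0 < n)%N -> z ^+ n = -1 -> Re (Hpoly n h0 h z) = 0 ->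
  \sum_(k < n.+1) (cf k - conjc (cf (n - k))) * z ^+ k = 0.
Proof.
move=> n0 zn hz.
have : (\sum_(k < n.+1) cf k * z ^+ k) + conjc (\sum_(k < n.+1) cf k * z ^+ k) = 0.
  by rewrite addcJ -Hsum hz C0 mulr0.
move=> H; apply: (etrans _ H).
rewrite rmorph_sum [X in _ + X](reindex_inj rev_ord_inj) /= -big_split /=.
apply: eq_bigr => k _; rewrite subSS.
have kn : (k <= n)%N by rewrite -ltnS.
rewrite rmorphM rmorphXn /= conj_pow ?leq_subr // subKn //.
by rewrite mulrN mulrBl.
Qed.

Lemma condB (z : R[i]) : (0 < n)%N -> z ^+ n = -1 ->
  \sum_(k < n.+1) Im (cf k * z ^+ k) *+ k = 0 ->
  \sum_(k < n.+1) (cf k *+ k + conjc (cf (n - k)) *+ (n - k)) * z ^+ k = 0.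
Proof.
move=> n0 zn hz.
pose T := \sum_(k < n.+1) (cf k * z ^+ k) *+ k.
have : T - conjc T = 0.
  by rewrite subcJ /T Im_sum (eq_bigr _ (fun k _ => ImMn _ _)) hz C0 mulr0 mul0r.
move=> H; apply: (etrans _ H).
rewrite /T rmorph_sum [X in _ - X](reindex_inj rev_ord_inj) /= -sumrN -big_split /=.
apply: eq_bigr => k _; rewrite subSS.
have kn : (k <= n)%N by rewrite -ltnS.
rewrite rmorphMn rmorphM rmorphXn /= conj_pow ?leq_subr // subKn //.
by rewrite mulrN mulNrn opprK mulrDl -!mulrnAl.
Qed.

Lemma final_form : (0 < n)%N -> (forall k, (0 < k < n)%N -> h k = 0) ->
  h0%:C = 2 * h n -> forall z, Hpoly n h0 h z = h0%:C * (1 + z ^+ n).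
Proof.
move=> n0 hk hn z.
rewrite Hsum (bigD1 ord0) //= (bigD1 ord_max) /=; last by rewrite -val_eqE /= -lt0n.
rewrite big1 => [|k /andP [k0 kmax]].
  by rewrite addr0 /cf /= expr0 mulr1 gtn_eqF // -hn mulrDr mulr1.
have k0' : (0 < k)%N by rewrite lt0n; move: k0; rewrite -val_eqE.
have kn : (k < n)%N.
  by rewrite ltn_neqAle -ltnS ltn_ord andbT; move: kmax; rewrite -val_eqE.
by rewrite /cf gtn_eqF // hk ?k0' // mulr0 mul0r.
Qed.
End Main.

Lemma roots_exist (R : rcfType) (n : nat) : (0 < n)%N ->
  exists rs : seq R[i], [/\ uniq rs, size rs = n & forall r, r \in rs -> r ^+ n = -1].
Proof.
move=> n0.
pose p : {poly R[i]} := 'X^n + 1%:P.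
have [rs prs] := closed_field_poly_normal p.
rewrite /p lead_coefXnaddC // scale1r -/p in prs.
exists rs; split.
- rewrite -separable_prod_XsubC -prs unlock.
  apply/Bezout_coprimepP; exists (1, - ((n%:R)^-1)%:P * 'X) => /=.
  have nn : (n%:R : R[i]) != 0 by rewrite pnatr_eq0 -lt0n.
  rewrite /p derivD derivC addr0 derivXn mul1r.
  rewrite (_ : _ + _ = 1) ?eqpxx //.
  rewrite mulrnAr -mulrA -exprS prednK // -mulrnAl -polyCN -polyCMn mulNrn.
  by rewrite -[n%:R^-1 *+ n]mulr_natr mulVf // polyCN polyC1 mulN1r addrAC subrr add0r.
- by apply/eqP; rewrite -eqSS -(size_XnaddC (1 : R[i]) n0) -/p prs size_prod_XsubC.
- move=> r rin; have : root p r by rewrite prs root_prod_XsubC.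
  by rewrite /p rootE !hornerE addr_eq0 => /eqP.
Qed.

Lemma reduce (R : rcfType) (n : nat) (d : nat -> R[i]) (z : R[i]) :
  (0 < n)%N -> z ^+ n = -1 ->
  (\poly_(k < n) (if k == 0%N then d 0%N - d n else d k)).[z] =
  \sum_(k < n.+1) d k * z ^+ k.
Proof.
case: n => [//|m] _ zm.
rewrite horner_poly [RHS]big_ord_recr /= zm [LHS]big_ord_recl [in RHS]big_ord_recl /=.
rewrite !expr0 !mulr1 mulrN1.
have -> : \sum_(i < m) (if bump 0 i == 0%N then d 0%N - d m.+1 else d (bump 0 i)) *
    z ^+ bump 0 i = \sum_(i < m) d (bump 0 i) * z ^+ bump 0 i by [].
by rewrite addrAC.
Qed.

Lemma vanish (R : rcfType) (n : nat) (d : nat -> R[i]) (rs : seq R[i]) :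
  (0 < n)%N -> uniq rs -> size rs = n -> (forall r, r \in rs -> r ^+ n = -1) ->
  (forall r, r \in rs -> \sum_(k < n.+1) d k * r ^+ k = 0) ->
  d 0%N = d n /\ forall k, (0 < k < n)%N -> d k = 0.
Proof.
move=> n0 urs srs rrs hd.
pose E := \poly_(k < n) (if k == 0%N then d 0%N - d n else d k).
have E0 : E = 0.
  apply: (roots_geq_poly_eq0 (rs := rs)) => //.
    by apply/allP => r rin; rewrite /root reduce ?rrs ?hd.
  by rewrite srs size_poly.
split.
  have := congr1 (fun p : {poly R[i]} => p`_0) E0; rewrite coef_poly n0 eqxx coef0.
  by move/eqP; rewrite subr_eq0 => /eqP.
move=> k /andP [k0 kn].
have := congr1 (fun p : {poly R[i]} => p`_k) E0; rewrite coef_poly kn coef0.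
by rewrite gtn_eqF.
Qed.


Theorem mainTheorem6 (R : realType) (n : nat) (hn1 : (1 <= n)%N) (h0 : R) (h0pos : 0 < h0)
    (h : nat -> R[i]) :
  [/\ (forall z : R[i], `|z| < 1 -> 0 < complex.Re (Hpoly n h0 h z)),
      0 < h n
    & (forall z : R[i], `|z| = 1 ->
         (complex.Re (Hpoly n h0 h z) = 0 <-> z ^+ n = -1))]
  <-> (forall z : R[i], Hpoly n h0 h z = h0%:C * (1 + z ^+ n)).
Proof.
have n0 : (0 < n)%N := hn1.
split.
- case=> hpos hnpos hzer.
  have circ := @circle_nonneg R n h0 h hpos.
  have [rs [urs srs rrs]] := @roots_exist R n n0.
  have hz r : r \in rs -> Re (Hpoly n h0 h r) = 0.
    by move=> rin; apply/(hzer r (norm_root1 n0 (rrs r rin))); exact: rrs.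
  have [A0 Ak] := @vanish R n (fun k => cf h0 h k - conjc (cf h0 h (n - k))) rs n0 urs srs rrs
    (fun r rin => condA n0 (rrs r rin) (hz r rin)).
  have [B0 Bk] := @vanish R n
    (fun k => cf h0 h k *+ k + conjc (cf h0 h (n - k)) *+ (n - k)) rs n0 urs srs rrs
    (fun r rin => condB n0 (rrs r rin) (deriv_cond n0 (rrs r rin) circ (hz r rin))).
  have hnr : conjc (h n) = h n.
    move: hnpos; rewrite ltcE => /andP [/eqP him _].
    by move: him; case: (h n) => a b /= ->; rewrite oppr0.
  apply: final_form n0 _ _.
  + move=> k kk; have := Ak k kk; have := Bk k kk => /=.
    move: kk => /andP [k0 kn].
    have nk : (n - k != 0)%N by rewrite subn_eq0 -ltnNge.
    rewrite /cf gtn_eqF // (negbTE nk) => hb /eqP; rewrite subr_eq0 => /eqP ha.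
    move: hb; rewrite -ha -mulrnDr subnKC; last exact: ltnW.
    move=> /eqP; rewrite mulrn_eq0 gtn_eqF //= mulf_eq0 pnatr_eq0 /= => /eqP //.

  + move: A0 => /=; rewrite subn0 subnn /cf eqxx gtn_eqF //.
    have c2 : forall x : R[i], conjc (2 * x) = 2 * conjc x.
      by move=> x; rewrite !mulr_natl rmorphMn.
    rewrite conjc_real c2 hnr => H.
    have : (h0%:C - 2 * h n) *+ 2 = 0 by rewrite mulr2n {2}H addrA subrK subrr.
    by move/eqP; rewrite mulrn_eq0 /= subr_eq0 => /eqP.
- move=> hH; split.
  + move=> z z1; rewrite hH ReMl mulr_gt0 // ReD.
    have : `|Re (z ^+ n)|%:C < 1.
      apply: le_lt_trans (normc_ge_Re _) _.
      by rewrite normrX exprn_ilt1 // gtn_eqF.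
    rewrite -C1 ltcR ltr_norml => /andP [h1 _].
    rewrite (_ : Re 1 = 1) //; lra.
  + pose Hp := \poly_(k < n.+1) cf h0 h k.
    pose Qp : {poly R[i]} := h0%:C%:P * (1 + 'X^n).
    have HQ : Hp = Qp.
      apply/eqP; rewrite -subr_eq0; apply/eqP.
      apply: (roots_geq_poly_eq0 (rs := [seq (i%:R : R[i]) | i <- iota 0 n.+2])).
      * apply/allP => x _; rewrite /root hornerD hornerN horner_poly -Hsum hH.
        by rewrite /Qp !hornerE subrr.
      * by rewrite map_inj_uniq ?iota_uniq // => i j /eqP; rewrite eqr_nat => /eqP.
      * rewrite size_map size_iota; apply: leq_trans (size_polyD _ _) _.
        rewrite size_polyN geq_max; apply/andP; split.
          by apply: leq_trans (size_poly _ _) _.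
        rewrite /Qp; apply: leq_trans (size_polyMleq _ _) _.
        by rewrite size_polyC addrC -polyC1 size_XnaddC //; lia.
    have := congr1 (fun p : {poly R[i]} => p`_n) HQ.
    rewrite coef_poly ltnSn /cf gtn_eqF // /Qp coefCM coefD coef1 coefXn eqxx gtn_eqF //.
    rewrite add0r mulr1 => e.
    have -> : h n = h0%:C / 2 by rewrite -e mulrC mulKf // pnatr_eq0.
    by rewrite divr_gt0 // ltcR.
  + move=> z z1; rewrite hH ReMl ReD (_ : Re 1 = 1) //.
    split.
    * move/eqP; rewrite mulf_eq0 gt_eqF //= => /eqP e.
      have w1 : `|z ^+ n| = 1 by rewrite normrX z1 expr1n.
      have := add_Re2_Im2 (z ^+ n); rewrite w1 expr1n.
      have eR : Re (z ^+ n) = -1 by apply/eqP; rewrite -subr_eq0 opprK addrC e.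
      rewrite eR sqrrN expr1n -C1 => /complexI /eqP.
      rewrite addrC -subr_eq0 addrK sqrf_eq0 => /eqP eI.
      move: eR eI; case: (z ^+ n) => a b /= -> ->.
      by rewrite -[-1 : R[i]]/((-1) +i* (-0)) oppr0.
    * by move=> ->; rewrite (_ : Re (-1) = -1) // subrr mulr0.
Qed.
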